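(* Let $a>0$, $\gamma>1$, $b>0$, and set $v_{1,1}=a$, $v_{2,1}=\gamma a$, $w_{1,1}=w_{2,1}=b$. Then $2\omega_-(\vartheta)\neq\omega_-(2\vartheta)$ for all $\vartheta\in(-\pi,\pi]$.
   Context: With $c_i:=2v_{i,1}+w_{i,1}$, for $\vartheta\in\mathbb R$ define $$\omega_\pm(\vartheta):=\sqrt{\tfrac12\Big(c_1+c_2\pm\sqrt{(c_1-c_2)^2+8v_{1,1}v_{2,1}(\cos\vartheta+1)}\Big)}.$$ *)

(* Defs.v *)
From Stdlib Require Import Reals.
Open Scope R_scope.

Definition cc (v w : R) : R := 2 * v + w.

Definition omega_minus (v11 w11 v21 w21 th : R) : R :=
  let c1 := cc v11 w11 in
  let c2 := cc v21 w21 in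
  sqrt ((1/2) * (c1 + c2 - sqrt ((c1 - c2)^2 + 8 * v11 * v21 * (cos th + 1)))).

(* Main.v *)
Require Import Defs.
From Stdlib Require Import Reals Lra Psatz.
Open Scope R_scope.
Lemma key0 (g u c : R): 1<g -> 2*g*c = u^2 - g^2 - 1 -> c <= 1 -> 0 <= u ->
  0 < 4*u - 3*(1+g) -> (4*u-3*(1+g))^2 <= (g-1)^2 + 4*g*c^2.
Proof.
  intros Hg Hc Hc1 Hu Hw.
  assert (Ht : u <= g+1) by nra.
  set (t := u - (g+1)).
  assert (Hq : 0 < t^2 + 4*(g+1)*t + 4*(g^2-g+1)).
  { assert (t > -(g+1)/4) by (unfold t; lra).
    assert (0 < 49*g^2 - 94*g + 49) by nra. nra. }
  assert (E : g*((g-1)^2 + 4*g*c^2) - g*(4*u-3*(1+g))^2 = t^2*(t^2 + 4*(g+1)*t + 4*(g^2-g+1))).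
  { replace (4*g*c^2) with ((2*g*c)^2/g) by (field; lra). rewrite Hc. unfold t. field. lra. }
  assert (0 <= t^2*(t^2 + 4*(g+1)*t + 4*(g^2-g+1))) by (apply Rmult_le_pos; nra).
  nra.
Qed.
Lemma key (a g r c : R): 0<a -> 1<g -> r^2 = 4*a^2*(g-1)^2 + 8*g*a^2*(c+1) -> c<=1 -> 0<=r ->
  0 < 4*r - 6*(1+g)*a -> (4*r-6*(1+g)*a)^2 <= 4*a^2*(g-1)^2 + 16*g*a^2*c^2.
Proof.
  intros Ha Hg Hr Hc Hr0 Hw.
  set (u := r/(2*a)).
  assert (Er : r = 2*a*u) by (unfold u; field; lra).
  clearbody u. subst r.
  assert (Hu : 0 <= u) by nra.
  assert (Hw' : 0 < 4*u - 3*(1+g)) by nra.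
  assert (Hc' : 2*g*c = u^2 - g^2 - 1).
  { assert (4*a^2*(u^2 - (g-1)^2 - 2*g*(c+1)) = 0) by nra.
    assert (a^2 <> 0) by nra.
    assert (u^2 - (g-1)^2 - 2*g*(c+1) = 0) by (apply (Rmult_eq_reg_l (4*a^2)); nra). nra. }
  pose proof (key0 g u c Hg Hc' Hc Hu Hw').
  replace (4*(2*a*u) - 6*(1+g)*a) with (2*a*(4*u-3*(1+g))) by ring.
  nra.
Qed.

Theorem mainTheorem3 (a gamma b : R) (ha : 0 < a) (hg : 1 < gamma) (hb : 0 < b) :
  forall th : R, - PI < th <= PI ->
    2 * omega_minus a b (gamma * a) b th <> omega_minus a b (gamma * a) b (2 * th).
Proof.
  intros th _ H. unfold omega_minus, cc in H.
  rewrite cos_2a_cos in H.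
  pose proof (COS_bound th) as [Hcl Hcu].
  set (c := cos th) in *. clearbody c.
  set (D1 := (2 * a + b - (2 * (gamma * a) + b)) ^ 2 + 8 * a * (gamma * a) * (c + 1)) in *.
  set (D2 := (2 * a + b - (2 * (gamma * a) + b)) ^ 2 + 8 * a * (gamma * a) * (2 * c * c - 1 + 1)) in *.
  assert (Hga : 0 < gamma*a) by nra.
  assert (HD1 : 0 <= D1) by (unfold D1; assert (0 <= 8*a*(gamma*a)*(c+1)) by (apply Rmult_le_pos; nra); pose proof (pow2_ge_0 (2 * a + b - (2 * (gamma * a) + b))); lra).
  assert (HD2 : 0 <= D2) by (unfold D2; assert (0 <= 8*a*(gamma*a)*(2*c*c-1+1)) by (apply Rmult_le_pos; nra); pose proof (pow2_ge_0 (2 * a + b - (2 * (gamma * a) + b))); lra).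
  pose proof (sqrt_sqrt D1 HD1) as E1. pose proof (sqrt_pos D1) as P1.
  pose proof (sqrt_sqrt D2 HD2) as E2. pose proof (sqrt_pos D2) as P2.
  set (r1 := sqrt D1) in *. set (r2 := sqrt D2) in *. clearbody r1 r2.
  unfold D1 in E1. unfold D2 in E2. clearbody D1 D2.
  set (S := 2 * a + b + (2 * (gamma * a) + b)) in *.
  assert (Q1 : r1*r1 <= (2*(1+gamma)*a)*(2*(1+gamma)*a)).
  { rewrite E1. assert (8*a*(gamma*a)*(c+1) <= 16*a*(gamma*a)) by nra. nra. }
  assert (Q2 : r2*r2 <= (2*(1+gamma)*a)*(2*(1+gamma)*a)).
  { rewrite E2. assert (8*a*(gamma*a)*(2*c*c-1+1) <= 16*a*(gamma*a)) by nra. nra. }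
  assert (L1 : r1 <= 2*(1+gamma)*a).
  { destruct (Rle_lt_dec r1 (2*(1+gamma)*a)); auto. nra. }
  assert (L2 : r2 <= 2*(1+gamma)*a).
  { destruct (Rle_lt_dec r2 (2*(1+gamma)*a)); auto. nra. }
  assert (R1 : 0 <= 1/2*(S - r1)) by (unfold S; lra).
  assert (R2 : 0 <= 1/2*(S - r2)) by (unfold S; lra).
  assert (H4 : 4 * (1/2*(S - r1)) = 1/2*(S - r2)).
  { rewrite <- (sqrt_sqrt _ R1), <- (sqrt_sqrt _ R2), <- H. ring. }
  assert (Hr2 : r2 = 4*r1 - 3*S) by lra.
  assert (Hw : 0 < 4*r1 - 6*(1+gamma)*a) by (unfold S in Hr2; lra).
  assert (K := key a gamma r1 c ha hg ltac:(replace (r1^2) with (r1*r1) by ring; rewrite E1; ring) Hcu P1 Hw).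
  assert (r2^2 = 4*a^2*(gamma-1)^2 + 16*gamma*a^2*c^2) by (replace (r2^2) with (r2*r2) by ring; rewrite E2; ring).
  assert (r2 < 4*r1 - 6*(1+gamma)*a) by (unfold S in Hr2; lra).
  nra.
Qed.
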